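(* Let $d\geq 0$ and $0<i\leq d+1$ be integers, and write $d+1=qi+r$ with integers $q\geq 0$, $1\leq r\leq i$. Let $\Delta\in\mathcal{C}(i,d)$. Then $f_j(\Delta)\geq f_j(S(i,d))$ for every $1\leq j\leq r$.
   Context: All simplicial complexes are finite abstract simplicial complexes; $f_j(\Delta)$ denotes the number of $j$-dimensional faces of $\Delta$. A set $F$ of vertices is a missing face of $\Delta$ if $F\notin\Delta$ but every proper subset of $F$ is in $\Delta$; its dimension is $|F|-1$. $\mathcal{C}(i,d)$ denotes the family of $d$-dimensional simplicial complexes $\Delta$ with $\tilde H_d(\Delta;\mathbb{Z})\neq 0$ (reduced homology) and with no missing faces of dimension $>i$. For integers $d\geq 0$, $i>0$ with $d+1=qi+r$ ($q\geq 0$, $1\leq r\leq i$), $S(i,d)$ is the simplicial join of $q$ copies of $\partial\sigma^i$ and one copy of $\partial\sigma^r$ on pairwise disjoint vertex sets, where $\partial\sigma^k$ is the boundary complex of the $k$-simplex. *)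

(* Defs.v *)
From HB Require Import structures.
From mathcomp Require Import all_boot all_order all_algebra.
Set Implicit Arguments. Unset Strict Implicit. Unset Printing Implicit Defensive.
Import Order.TTheory GRing.Theory Num.Theory.

Definition is_complex (T : finType) (D : {set {set T}}) : Prop :=
  set0 \in D /\ (forall F G : {set T}, F \in D -> G \subset F -> G \in D).

Definition has_dim (T : finType) (D : {set {set T}}) (d : nat) : Prop :=
  (exists2 F, F \in D & #|F| = d.+1) /\ (forall F, F \in D -> #|F| <= d.+1).

Definition fnum (T : finType) (D : {set {set T}}) (j : nat) : nat :=
  #|[set F in D | #|F| == j.+1]|.

Definition missing_face (T : finType) (D : {set {set T}}) (F : {set T}) : Prop :=
  F \notin D /\ (forall G : {set T}, G \proper F -> G \in D).

Definition no_missing_above (T : finType) (D : {set {set T}}) (i : nat) : Prop :=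
  forall F, missing_face D F -> (#|F| - 1 <= i)%N.

(* Simplicial chain complex with integer coefficients on vertex set 'I_n,
   oriented by the natural order of vertices.  The coefficient of the facet
   G = F \ {v} in the boundary of the oriented simplex F is (-1)^k where k is
   the number of vertices of F smaller than v. *)
Definition bsign (n : nat) (F : {set 'I_n}) (v : 'I_n) : int :=
  (-1) ^+ #|[set u in F | (u < v)%N]|.

(* the (reduced) boundary of a d-chain c (a function on the d-faces of D),
   evaluated at a set G with |G| = d (G = set0 when d = 0: augmentation) *)
Definition bdry (n : nat) (D : {set {set 'I_n}}) (d : nat)
    (c : {set 'I_n} -> int) (G : {set 'I_n}) : int :=
  \sum_(F in D | (#|F| == d.+1) && (G \subset F))
     \sum_(v in F :\: G) (bsign F v * c F)%R.

(* Reduced d-th homology with integer coefficients of a complex of dimension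
   d: since there are no (d+1)-faces, there are no d-boundaries, so
   \tilde H_d(D;Z) = ker (\partial_d : C_d -> C_{d-1}) (with C_{-1} = Z). *)
Definition top_red_homology_nonzero (n : nat) (D : {set {set 'I_n}}) (d : nat)
  : Prop :=
  exists c : {set 'I_n} -> int,
    (forall F, c F != 0%R -> (F \in D) && (#|F| == d.+1)) /\
    (exists F, c F != 0%R) /\
    (forall G : {set 'I_n}, #|G| = d -> bdry D d c G = 0%R).

Definition in_C (n : nat) (i d : nat) (D : {set {set 'I_n}}) : Prop :=
  is_complex D /\ has_dim D d /\ top_red_homology_nonzero D d /\
  no_missing_above D i.

Definition bd_simplex (T : finType) (A : {set T}) : {set {set T}} :=
  [set F : {set T} | F \proper A].

(* S(i,d): with d+1 = q i + r, q = d %/ i, r = d %% i + 1.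
   Vertex set 'I_N with N = q(i+1) + (r+1), split into blocks
   block b = {k | k %/ (i+1) = b}, b = 0..q: q blocks of size i+1
   and a last block (b = q) of size r+1.  S(i,d) is the join of the
   boundary complexes of the simplices on these blocks: a face is a set
   whose intersection with every block is a face of the block's boundary. *)
Definition S_q (i d : nat) : nat := d %/ i.
Definition S_r (i d : nat) : nat := (d %% i).+1.
Definition S_N (i d : nat) : nat := S_q i d * i.+1 + (S_r i d).+1.

Definition S_block (i d : nat) (b : nat) : {set 'I_(S_N i d)} :=
  [set k : 'I_(S_N i d) | (k %/ i.+1 == b)%N].

Definition S_complex (i d : nat) : {set {set 'I_(S_N i d)}} :=
  [set F : {set 'I_(S_N i d)} |
     [forall b : 'I_(S_q i d).+1,
        (F :&: S_block i d b) \in bd_simplex (S_block i d b)]].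

(* Main.v *)
Require Import Defs.
From HB Require Import structures.
From mathcomp Require Import all_boot all_order all_algebra.
From Stdlib Require Import Lia.
Set Implicit Arguments. Unset Strict Implicit. Unset Printing Implicit Defensive.
Import GRing.Theory.

Ltac toP := repeat match goal with
 | H : is_true (leq _ _) |- _ => move/leP: H => H; rewrite -?plusE -?multE -?minusE in H
 | H : @eq nat _ _ |- _ => rewrite -?plusE -?multE -?minusE in H; revert H
 end; intros.
Ltac ar := intros; toP; try apply/leP; rewrite -?plusE -?multE -?minusE; nia.


Definition Hyp (T : finType) (i : nat) (D G : {set {set T}}) (d : nat) : Prop :=
  [/\ (forall F H : {set T}, F \in D -> H \subset F -> H \in D),
      (forall F, F \in D -> #|F| <= d.+1),
      (forall F, F \notin D -> exists M : {set T}, [/\ M \subset F, M \notin D & #|M| <= i.+1]),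
      (forall s : {set T}, s \in G -> (s \in D) /\ #|s| = d.+1) &
      ((exists s : {set T}, s \in G) /\ forall (s : {set T}) x, s \in G -> x \in s ->
          exists s' : {set T}, [/\ s' \in G, s' != s & s :\ x \subset s'])].

Definition supp (T : finType) (G : {set {set T}}) : {set T} := \bigcup_(s in G) s.
Definition cnt (T : finType) (D : {set {set T}}) (W : {set T}) (k : nat) :=
  #|[set F in D | (F \subset W) && (#|F| == k)]|.
Definition lk (T : finType) (D : {set {set T}}) (G : {set T}) : {set {set T}} :=
  [set t : {set T} | [disjoint t & G] && (t :|: G \in D)].

Lemma in_lk (T : finType) (D : {set {set T}}) G t :
  (t \in lk D G) = [disjoint t & G] && (t :|: G \in D).
Proof. by rewrite inE. Qed.

Lemma card_disjU (T : finType) (A B : {set T}) :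
  [disjoint A & B] -> #|A :|: B| = #|A| + #|B|.
Proof. by move=> dAB; rewrite -cardsUI disjoint_setI0 // cards0 addn0. Qed.

Lemma disjP (T : finType) (A B : {set T}) :
  reflect (forall x, x \in A -> x \notin B) [disjoint A & B].
Proof.
rewrite disjoints_subset; apply: (iffP subsetP) => H x xA.
  by move: (H x xA); rewrite inE.
by rewrite inE; apply: H.
Qed.

Lemma setDKU (T : finType) (A B : {set T}) : B \subset A -> (A :\: B) :|: B = A.
Proof.
move=> BA; apply/setP=> x; rewrite !inE; case xB: (x \in B) => /=.
  by move/subsetP: BA => /(_ x xB) ->.
by rewrite orbF.
Qed.

Lemma disjD (T : finType) (A B : {set T}) : [disjoint A :\: B & B].
Proof. by apply/disjP=> x; rewrite inE => /andP[]. Qed.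

Lemma lk_hyp (T : finType) i (D G : {set {set T}}) d d' (G0 s0 : {set T}) :
  Hyp i D G d -> s0 \in G -> G0 \subset s0 -> #|G0| + d' = d ->
  Hyp i (lk D G0) (lk G G0) d'.
Proof.
case=> down dim nm Gf [[s1 s1G] ridge] s0G G0s0 hd.
split.
- move=> F H; rewrite !in_lk => /andP[dF FD] HF.
  rewrite (disjointWl HF dF) /=; apply: down FD _; exact: setSU.
- move=> F; rewrite in_lk => /andP[dF /dim]; rewrite card_disjU // -hd.
  by rewrite -addnS addnC leq_add2l.
- move=> F; rewrite in_lk negb_and => /orP[].
  + rewrite -setI_eq0 => /set0Pn[x]; rewrite inE => /andP[xF xG0].
    exists [set x]; split.
    * by rewrite sub1set.
    * by rewrite in_lk -setI_eq0 negb_and; apply/orP; left; apply/set0Pn; exists x; rewrite !inE eqxx.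
    * by rewrite cards1.
  + move=> FG; case: (nm _ FG) => M [MF MD Mc]; exists (M :\: G0); split.
    * apply/subsetP => x; rewrite inE => /andP[xG /(subsetP MF)].
      by rewrite inE (negPf xG) orbF.
    * rewrite in_lk negb_and; apply/orP; right; apply: contra MD => H.
      apply: down H _; apply/subsetP => x xM; rewrite !inE xM andbT.
      by case: (x \in G0).
    * apply: leq_trans Mc; apply: subset_leq_card; exact: subsetDl.
- move=> t; rewrite in_lk => /andP[dt /Gf[tD tc]]; rewrite in_lk dt tD; split=> //.
  move: tc; rewrite card_disjU // -hd -addnS addnC => /eqP.
  by rewrite eqn_add2l => /eqP.
- split.
  + exists (s0 :\: G0); rewrite in_lk disjD setDKU //.
  + move=> t x; rewrite !in_lk => /andP[dt tG] xt.
    have xG0 : x \notin G0 by move/disjP: dt; apply.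
    case: (ridge _ x tG); first by rewrite inE xt.
    move=> s' [s'G ne sub].
    have G0s' : G0 \subset s'.
      apply: subset_trans sub; apply/subsetP=> y yG0; rewrite !inE yG0 orbT andbT.
      by apply: contraNneq xG0 => <-.
    exists (s' :\: G0); split.
    * by rewrite in_lk disjD setDKU.
    * apply: contra ne => /eqP e; apply/eqP.
      by rewrite -(setDKU G0s') e.
    * apply/subsetP=> y; rewrite !inE => /andP[yx yt].
      have yG0 : y \notin G0 by move/disjP: dt; apply.
      rewrite yG0 /=; apply: (subsetP sub); by rewrite !inE yx yt.
Qed.



Lemma in_supp (T : finType) (G : {set {set T}}) x :
  reflect (exists2 s, s \in G & x \in s) (x \in supp G).
Proof. exact: bigcupP. Qed.

Lemma sub_supp (T : finType) (G : {set {set T}}) s : s \in G -> s \subset supp G.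
Proof. by move=> sG; apply/subsetP=> x xs; apply/in_supp; exists s. Qed.

Lemma supp_lk (T : finType) (G : {set {set T}}) (G0 : {set T}) :
  supp (lk G G0) \subset supp G :\: G0.
Proof.
apply/subsetP=> x /in_supp[t]; rewrite in_lk => /andP[dt tG] xt.
rewrite inE; apply/andP; split; first by move/disjP: dt; apply.
apply/in_supp; exists (t :|: G0) => //; by rewrite inE xt.
Qed.

Lemma set_between (T : finType) (A B : {set T}) k :
  A \subset B -> #|A| <= k -> k <= #|B| ->
  exists F : {set T}, [/\ A \subset F, F \subset B & #|F| = k].
Proof.
move=> AB Ak kB; have [m km] : exists m, k = #|A| + m by exists (k - #|A|); rewrite subnKC.
subst k; clear Ak; elim: m kB => [|m IH] kB; first by exists A; rewrite addn0.
case: IH; first by move: kB; ar.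
move=> F [AF FB cF].
have : ~~ (B \subset F).
  apply/negP => BF; have := subset_leq_card BF; rewrite cF; move: kB; ar.
case/subsetPn=> x xB xF; exists (x |: F); split.
- by apply: subset_trans AF (subsetUr _ _).
- by rewrite subUset sub1set xB.
- by rewrite cardsU1 xF cF addnS.
Qed.

Lemma card_supp_D1 (T : finType) (G : {set {set T}}) (A : {set T}) :
  A \subset supp G -> #|supp G| = #|A| + #|supp G :\: A|.
Proof.
move=> AS; rewrite -(cardsID A (supp G)); congr (_ + _).
by apply/eq_card => x; rewrite inE andbC; case xA: (x \in A) => //=; rewrite (subsetP AS).
Qed.

Lemma L0_step (T : finType) i q s (D G : {set {set T}}) : 0 < i ->
  (forall q' s' (D' G' : {set {set T}}), q' * i + s' < q * i + s -> s' < i ->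
      Hyp i D' G' (q' * i + s') -> q' * i + s' + 2 + q' <= #|supp G'|) ->
  s < i -> Hyp i D G (q * i + s) -> q * i + s + 2 + q <= #|supp G|.
Proof.
move=> i0 IH si H; have [down dim nm Gf [[s1 s1G] ridge]] := H.
case: s si H IH Gf dim ridge => [|s'] si H IH Gf dim ridge.
  case: q IH H Gf dim ridge => [|q'] IH H Gf dim ridge.
    have /cards1P[a ea] : #|s1| == 1 by rewrite (Gf s1 s1G).2.
    have aS : a \in s1 by rewrite ea inE.
    case: (ridge s1 a s1G aS) => s2 [s2G ne _].
    have /cards1P[b eb] : #|s2| == 1 by rewrite (Gf s2 s2G).2.
    have ab : a != b by apply: contra ne => /eqP ab; rewrite ea eb ab.
    have : [set a; b] \subset supp G.
      rewrite subUset !sub1set; apply/andP; split; apply/in_supp.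
        by exists s1 => //; rewrite ea inE.
      by exists s2 => //; rewrite eb inE.
    by move/subset_leq_card; rewrite cards2 ab mul0n.
  have /set0Pn[x xs1] : s1 != set0 by rewrite -card_gt0 (Gf s1 s1G).2.
  case: (ridge s1 x s1G xs1) => s2 [s2G ne sub].
  have [y ys2 ys1] : exists2 y, y \in s2 & y \notin s1.
    apply/subsetPn; apply/negP => s21; move/negP: ne; apply.
    by rewrite eqEcard s21 (Gf s1 s1G).2 (Gf s2 s2G).2 leqnn.
  have nD : y |: s1 \notin D.
    by apply/negP => /dim; rewrite cardsU1 ys1 (Gf s1 s1G).2 add1n ltnn.
  case: (nm _ nD) => M [MU MD Mc].
  have yM : y \in M.
    apply/negPn/negP => yM; move/negP: MD; apply; apply: down (Gf s1 s1G).1 _.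
    apply/subsetP=> z zM; case/setU1P: (subsetP MU z zM) => [zy|//].
    by move: yM; rewrite -zy zM.
  have xM : x \in M.
    apply/negPn/negP => xM; move/negP: MD; apply; apply: down (Gf s2 s2G).1 _.
    apply/subsetP=> z zM; case/setU1P: (subsetP MU z zM) => [->//|zs1].
    apply: (subsetP sub); rewrite !inE zs1 andbT; apply: contraNneq xM => <-//.
  have As1 : M :\ y \subset s1.
    apply/subsetP=> z; rewrite !inE => /andP[zy zM].
    by case/setU1P: (subsetP MU z zM) => [/eqP|//]; rewrite (negPf zy).
  have Ac : #|M :\ y| <= i.
    by move: Mc; rewrite (cardsD1 y M) yM add1n ltnS.
  have is1 : i <= #|s1| by rewrite (Gf s1 s1G).2; ar.
  have [F [AF Fs1 cF]] := set_between As1 Ac is1.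
  have yF : y \notin F by apply: contra ys1; apply: (subsetP Fs1).
  have FyD : y |: F \notin D.
    apply: contra MD => h; apply: down h _; apply/subsetP=> z zM.
    case: (z =P y) => [->|zy]; first by rewrite setU11.
    by rewrite setU1r //; apply: (subsetP AF); rewrite !inE zM andbT; apply/eqP.
  have Hl := lk_hyp (d' := q' * i + 0) H s1G Fs1 (_ : #|F| + (q' * i + 0) = q'.+1 * i + 0).
  have := IH q' 0 _ _ (_ : q' * i + 0 < q'.+1 * i + 0) i0 (Hl _).
  have h1 : supp (lk G F) \subset supp G :\: (y |: F).
    apply/subsetP=> z zs; have := subsetP (supp_lk G F) z zs; rewrite !inE => /andP[zF ->].
    rewrite andbT negb_or (negPf zF) andbT; apply: contraNneq FyD => zy; move: zs; rewrite zy.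
    case/in_supp=> t; rewrite in_lk => /andP[dt tG] yt.
    apply: down (Gf _ tG).1 _; apply/subsetP=> w; rewrite !inE => /orP[/eqP ->|->].
      by rewrite yt.
    by rewrite orbT.
  have h2 := card_supp_D1 (A := y |: F) (_ : y |: F \subset supp G).
  rewrite h2; last first.
    rewrite subUset sub1set; apply/andP; split; first by apply/in_supp; exists s2.
    exact: subset_trans Fs1 (sub_supp s1G).
  rewrite cardsU1 yF cF /=; move: (subset_leq_card h1) => h3 h4.
  have h5 : q' * i + 0 + 2 + q' <= #|supp (lk G F)| by apply: h4; ar.
  move: h3 h5; ar.
have /set0Pn[v vs1] : s1 != set0 by rewrite -card_gt0 (Gf s1 s1G).2.
have Hl := lk_hyp (d' := q*i+s') H s1G (G0:=[set v]).
have := IH q s' _ _ (_ : q * i + s' < q * i + s'.+1) (ltnW si) (Hl _ _).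
have h1 := subset_leq_card (supp_lk G [set v]).
have h2 := card_supp_D1 (A := [set v]) (_ : [set v] \subset supp G).
rewrite cards1 in h2; rewrite h2; last first.
  by rewrite sub1set; apply/in_supp; exists s1.
move=> h3; apply: leq_trans (_ : 1 + #|supp (lk G [set v])| <= _); last first.
  by rewrite leq_add2l.
have : q * i + s'.+1 + 2 + q = (q * i + s' + 2 + q).+1 by ar.
move=> ->; apply: h3 => //.
- by rewrite addnS.
- by rewrite sub1set.
- by rewrite cards1 add1n addnS.
Qed.

Lemma L0 (T : finType) i : 0 < i -> forall m q s (D G : {set {set T}}),
  q * i + s <= m -> s < i -> Hyp i D G (q * i + s) -> q * i + s + 2 + q <= #|supp G|.
Proof.
move=> i0; elim=> [|m IH] q s D G hm si H; apply: (L0_step (D := D)) => // q' s' D' G' h.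
  by move: hm h; ar.
apply: IH; move: hm h; ar.
Qed.



Definition nonf (T : finType) (P : {set {set T}}) (W : {set T}) k :=
  [set B : {set T} | (B \subset W) && (#|B| == k) && (B \notin P)].

Lemma split_count (T : finType) (P : {set {set T}}) (W : {set T}) k :
  cnt P W k + #|nonf P W k| = 'C(#|W|, k).
Proof.
rewrite -cards_draws -(cardsID P [set A : {set T} | A \subset W & #|A| == k]) /cnt.
congr (_ + _); apply: eq_card => B; rewrite !inE.
  by rewrite andbC.
by rewrite andbC.
Qed.

Lemma cnt_le (T : finType) (P : {set {set T}}) (W : {set T}) k : cnt P W k <= 'C(#|W|, k).
Proof. by rewrite -(split_count P W k) leq_addr. Qed.

Lemma all_in (T : finType) (P : {set {set T}}) (W : {set T}) k :
  'C(#|W|, k) <= cnt P W k -> forall B : {set T}, B \subset W -> #|B| = k -> B \in P.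
Proof.
rewrite -(split_count P W k) -{2}[cnt P W k]addn0 leq_add2l leqn0 cards_eq0 => /eqP e B BW cB.
apply/negPn/negP => BP; have : B \in nonf P W k by rewrite !inE BW cB eqxx BP.
by rewrite e inE.
Qed.

Lemma dc (T : finType) (D : {set {set T}}) (U : {set T}) k :
  k * cnt D U k = \sum_(v in U) #|[set F in D | (F \subset U) && (#|F| == k) && (v \in F)]|.
Proof.
have e1 : forall v, #|[set F in D | (F \subset U) && (#|F| == k) && (v \in F)]| =
   \sum_(F in [set F in D | (F \subset U) && (#|F| == k)]) (v \in F).
  move=> v; rewrite -sum1_card [RHS]big_mkcond /= [LHS]big_mkcond /=.
  apply: eq_bigr => F _; rewrite !inE; by case: (F \in D); case: (F \subset U); case: (#|F| == k); case: (v \in F).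
under eq_bigr => v _ do rewrite e1.
rewrite exchange_big /= mulnC -sum_nat_const; apply: eq_bigr => F.
rewrite !inE => /andP[FD /andP[FU /eqP cF]].
rewrite -cF -sum1_card [RHS]big_mkcond /= big_mkcond /=; apply: eq_bigr => v _.
case vF: (v \in F); last by case: (v \in U).
by rewrite (subsetP FU).
Qed.

Lemma deg_lb (T : finType) (D : {set {set T}}) (U W : {set T}) v k :
  v \in U -> W \subset U :\ v ->
  cnt (lk D [set v]) W k <= #|[set F in D | (F \subset U) && (#|F| == k.+1) && (v \in F)]|.
Proof.
move=> vU WU; rewrite /cnt.
set A := [set F in lk D [set v] | _].
have inj : {in A &, injective (fun t => t :|: [set v])}.
  move=> t1 t2; rewrite !inE => /andP[/andP[d1 _] _] /andP[/andP[d2 _] _] e.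
  apply/setP=> x; have := congr1 (fun S : {set T} => x \in S) e; rewrite /= !inE.
  case: (x =P v) => [->|_]; last by rewrite !orbF.
  have n1 : v \notin t1 by apply/negP => vt; move/disjP: d1 => /(_ v vt); rewrite inE eqxx.
  have n2 : v \notin t2 by apply/negP => vt; move/disjP: d2 => /(_ v vt); rewrite inE eqxx.
  by rewrite (negPf n1) (negPf n2).
rewrite -(card_in_imset inj); apply: subset_leq_card; apply/subsetP=> F /imsetP[t].
rewrite !inE => /andP[/andP[dt tD] /andP[tW /eqP ct]] ->.
rewrite tD /= !inE eqxx orbT !andbT; apply/andP; split.
  rewrite subUset sub1set; apply/andP; split.
    by apply: subset_trans tW (subset_trans WU (subsetDl _ _)).
  by [].
by rewrite card_disjU // cards1 ct addn1.
Qed.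

Lemma avg (T : finType) (D : {set {set T}}) (U : {set T}) k L :
  (forall v, v \in U -> L <= #|[set F in D | (F \subset U) && (#|F| == k) && (v \in F)]|) ->
  #|U| * L <= k * cnt D U k.
Proof. by move=> H; rewrite dc -sum_nat_const; apply: leq_sum. Qed.

Lemma bin_ge (m k : nat) : 0 < k -> k < m -> m <= 'C(m, k).
Proof.
move=> k0; elim: m => [//|m IH] km.
case: k k0 km IH => [//|k] _ km IH.
rewrite binS; case: (ltngtP k.+1 m) => h.
- have h2 := IH h; have h1 : 0 < 'C(m, k) by rewrite bin_gt0 ltnW.
  by rewrite -addn1 leq_add.
- by move: km; rewrite ltnS leqNgt h.
- by rewrite -h binn binSn.
Qed.

Lemma vlink (T : finType) i (D G : {set {set T}}) d v :
  Hyp i D G d.+1 -> v \in supp G -> Hyp i (lk D [set v]) (lk G [set v]) d.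
Proof.
move=> H /in_supp[s sG vs]; apply: (lk_hyp H sG); first by rewrite sub1set.
by rewrite cards1 add1n.
Qed.

Lemma sing (T : finType) i (D G : {set {set T}}) d :
  Hyp i D G d -> #|supp G| <= cnt D (supp G) 1.
Proof.
case=> down _ _ Gf _.
rewrite -(card_imset _ set1_inj); apply: subset_leq_card; apply/subsetP=> F /imsetP[u uU ->].
rewrite !inE sub1set uU cards1 eqxx.
apply/andP; split => //; case/in_supp: uU => s sG us; apply: down (Gf s sG).1 _; by rewrite sub1set.
Qed.

Lemma hyp_empty (T : finType) i (D G : {set {set T}}) d : Hyp i D G d -> set0 \in D.
Proof. case=> down _ _ Gf [[s sG] _]; apply: down (Gf s sG).1 _; exact: sub0set. Qed.



Definition MS (T : finType) i q s (D G : {set {set T}}) : Prop :=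
  (forall j, j <= s -> 'C(q * i + s + 2 + q, j.+1) <= cnt D (supp G) j.+1) /\
  'C(q * i + s + 2 + q, s.+2) - (1 + q * (s.+1 == i)) <= cnt D (supp G) s.+2.

Lemma partA (T : finType) i q s (D G : {set {set T}}) : 0 < i ->
  (forall q' s' (D' G' : {set {set T}}), q' * i + s' < q * i + s -> s' < i ->
      Hyp i D' G' (q' * i + s') -> MS i q' s' D' G') ->
  s < i -> Hyp i D G (q * i + s) ->
  forall j, j <= s -> 'C(q * i + s + 2 + q, j.+1) <= cnt D (supp G) j.+1.
Proof.
move=> i0 IH si H; have nU := L0 i0 (leqnn _) si H.
case=> [|j] js.
  by rewrite bin1; apply: leq_trans nU (sing H).
case: s si H IH js nU => [//|s] si H IH js nU.
have Hv : forall v, v \in supp G -> Hyp i (lk D [set v]) (lk G [set v]) (q * i + s).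
  by move=> v vU; apply: (vlink (d := q * i + s)) => //; rewrite -addnS.
have h : #|supp G| * 'C(q * i + s + 2 + q, j.+1) <= j.+2 * cnt D (supp G) j.+2.
  apply: avg => v vU; apply: leq_trans (deg_lb _ _ vU (supp_lk G [set v])).
  by apply: (IH q s _ _ _ (ltnW si) (Hv v vU)).1; rewrite ?addnS.
rewrite -(leq_pmul2l (ltn0Sn j.+1)) -mul_bin_diag.
apply: leq_trans h.
have -> : (q * i + s.+1 + 2 + q).-1 = q * i + s + 2 + q by ar.
by rewrite leq_mul2r nU orbT.
Qed.

Lemma partB_nt (T : finType) i q s (D G : {set {set T}}) : 0 < i ->
  (forall q' s' (D' G' : {set {set T}}), q' * i + s' < q * i + s -> s' < i ->
      Hyp i D' G' (q' * i + s') -> MS i q' s' D' G') ->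
  s < i -> Hyp i D G (q * i + s) -> 0 < q ->
  q * i + s + 2 + q < #|supp G| ->
  'C(q * i + s + 2 + q, s.+2) - (1 + q * (s.+1 == i)) <= cnt D (supp G) s.+2.
Proof.
move=> i0 IH si H q0 nU.
set N := q * i + s + 2 + q.
set e := 1 + _.
have e1 : 1 <= e by rewrite leq_addr.
rewrite -(leq_pmul2l (ltn0Sn s.+1)) mulnBr -mul_bin_diag.
case: s si H IH nU @N @e e1 => [|s] si H IH nU N e e1.
  case: q q0 IH H nU @N @e e1 => [//|q] _ IH H nU N e e1.
  have Hv : forall v, v \in supp G -> Hyp i (lk D [set v]) (lk G [set v]) (q * i + i.-1).
    move=> v vU; apply: (vlink (d := q * i + i.-1)) => //.
    have -> : (q * i + i.-1).+1 = q.+1 * i + 0 by ar.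
    done.
  have h : #|supp G| * (q * i + i.-1 + 2 + q) <= 2 * cnt D (supp G) 2.
    apply: avg => v vU; apply: leq_trans (deg_lb _ _ vU (supp_lk G [set v])).
    apply: leq_trans (sing (Hv v vU)).
    apply: (L0 i0 (leqnn _) _ (Hv v vU)); ar.
  move: h nU; rewrite bin1 /N /e; ar.
have Hv : forall v, v \in supp G -> Hyp i (lk D [set v]) (lk G [set v]) (q * i + s).
  by move=> v vU; apply: (vlink (d := q * i + s)) => //; rewrite -addnS.
have h : #|supp G| * ('C(q * i + s + 2 + q, s.+2) - 1) <= s.+3 * cnt D (supp G) s.+3.
  apply: avg => v vU; apply: leq_trans (deg_lb _ _ vU (supp_lk G [set v])).
  have := (IH q s _ _ _ (ltnW si) (Hv v vU)).2; rewrite ?addnS => /(_ (ltnSn _)).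
  have -> : (s.+1 == i) = false by apply/negbTE; rewrite neq_ltn si.
  by rewrite muln0 addn0.
have -> : N.-1 = q * i + s + 2 + q by rewrite /N; ar.
have hc : q * i + s + 2 + q <= 'C(q * i + s + 2 + q, s.+2).
  apply: bin_ge => //; ar.
move: h nU hc e1; rewrite /N; ar.
Qed.

Lemma partB_t (T : finType) i q s (D G : {set {set T}}) : 0 < i ->
  (forall q' s' (D' G' : {set {set T}}), q' * i + s' < q * i + s -> s' < i ->
      Hyp i D' G' (q' * i + s') -> MS i q' s' D' G') ->
  s < i -> Hyp i D G (q * i + s) -> 0 < q ->
  #|supp G| <= q * i + s + 2 + q ->
  'C(q * i + s + 2 + q, s.+2) - (1 + q * (s.+1 == i)) <= cnt D (supp G) s.+2.
Proof.
move=> i0 IH si H q0 tU.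
have [down dim nm Gf [[s1 s1G] ridge]] := H.
set U := supp G; set N := q * i + s + 2 + q; set e := 1 + _.
have nU := L0 i0 (leqnn _) si H.
have cU : #|U| = N by apply/eqP; rewrite eqn_leq tU nU.
have pA := partA i0 IH si H.
have T1 : forall B : {set T}, B \subset U -> #|B| <= s.+1 -> B \in D.
  move=> B BU; case cB: #|B| => [|k] hk.
    by move/cards0_eq: cB => ->; apply: hyp_empty H.
  by apply: (all_in (P := D) (W := U) (k := k.+1)) _ B BU cB; rewrite cU; apply: pA.
have T2 : forall g, g <= s.+1 -> forall B : {set T}, B \subset U -> #|B| = g ->
    exists2 t, t \in G & B \subset t.
  elim=> [|g IHg] hg B BU cB.
    by exists s1 => //; move/cards0_eq: cB => ->; apply: sub0set.
  have /set0Pn[w wB] : B != set0 by rewrite -card_gt0 cB.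
  have cBw : #|B :\ w| = g by move: cB; rewrite (cardsD1 w B) wB add1n => -[].
  have [t0 t0G Bt0] := IHg (ltnW hg) (B :\ w) (subset_trans (subD1set B w) BU) cBw.
  have Hl := lk_hyp (d' := q * i + (s - g)) H t0G Bt0.
  have Hl' : Hyp i (lk D (B :\ w)) (lk G (B :\ w)) (q * i + (s - g)).
    by apply: Hl; rewrite cBw; move: hg; ar.
  have L := L0 i0 (leqnn _) (_ : s - g < i) Hl'.
  have sb := supp_lk G (B :\ w).
  have cc := card_supp_D1 (A := B :\ w) (subset_trans (subD1set B w) BU).
  have eqs : supp (lk G (B :\ w)) = U :\: (B :\ w).
    apply/eqP; rewrite eqEcard sb /=.
    have L2 := L (leq_ltn_trans (leq_subr _ _) si).
    move: cc L2 hg; rewrite cU cBw /N /U; ar.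
  have : w \in supp (lk G (B :\ w)).
    by rewrite eqs !inE eqxx /= (subsetP BU).
  case/in_supp=> t; rewrite in_lk => /andP[dt tG] wt.
  exists (t :|: B :\ w) => //; apply/subsetP=> z zB.
  case: (z =P w) => [->|zw]; first by rewrite inE wt.
  by rewrite !inE zB andbT; apply/orP; right; apply/eqP.
suff hX : #|nonf D U s.+2| <= e.
  have := split_count D U s.+2; rewrite cU => <-; move: hX; ar.
case: (set_0Vmem (nonf D U s.+2)) => [-> | [M1 M1X]]; first by rewrite cards0.
move: (M1X); rewrite !inE => /andP[/andP[M1U /eqP cM1] M1D].
have [qq Eq] : exists qq, q = qq.+1 by exists q.-1; rewrite prednK.
have [ii Ei] : exists ii, i = ii.+1 by exists i.-1; rewrite prednK.
have cUM : #|U :\: M1| = qq * i + ii + 2 + qq.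
  have := card_supp_D1 (A := M1) M1U; rewrite -/U cU cM1 /N; ar.
have K : forall G0 : {set T}, G0 \subset M1 -> #|G0| = s.+1 ->
    (forall B : {set T}, B \subset U :\: M1 -> #|B| <= i -> B :|: G0 \in D) /\
    #|nonf (lk D G0) (U :\: M1) i.+1| <= q.
  move=> G0 G0M cG0.
  have [t0 t0G G0t0] := T2 s.+1 (leqnn _) G0 (subset_trans G0M M1U) cG0.
  have Hl : Hyp i (lk D G0) (lk G G0) (qq * i + ii).
    apply: (lk_hyp H t0G G0t0); rewrite cG0; ar.
  have lt : qq * i + ii < q * i + s by ar.
  have iii : ii < i by ar.
  have [IHa IHb] := IH _ _ _ _ lt iii Hl.
  have eqs : supp (lk G G0) = U :\: M1.
    apply/eqP; rewrite eqEcard; apply/andP; split; last first.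
      by rewrite cUM; apply: (L0 i0 (leqnn _) iii Hl).
    apply/subsetP=> z zs; have := subsetP (supp_lk G G0) z zs.
    rewrite !inE => /andP[zG0 zU]; rewrite zU andbT; apply/negP => zM1.
    have e1 : z |: G0 = M1.
      apply/eqP; rewrite eqEcard subUset sub1set zM1 G0M cM1 cardsU1 zG0 cG0 /=.
      by rewrite add1n.
    case/in_supp: zs => t; rewrite in_lk => /andP[dt tG] zt.
    move/negP: M1D; apply; apply: down (Gf _ tG).1 _; rewrite -e1 subUset sub1set.
    by rewrite inE zt subsetUr.
  split.
    move=> B BU cB; case cB0: #|B| => [|k].
      by move/cards0_eq: cB0 => ->; rewrite set0U; apply: down (Gf _ t0G).1 G0t0.
    have hk : k <= ii by move: cB; rewrite cB0 Ei.
    have := IHa k hk; rewrite -cUM -eqs => /all_in /(_ B) hB.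
    have : B \in lk D G0 by apply: hB; rewrite ?eqs.
    by rewrite in_lk => /andP[].
  move: IHb; rewrite eqs -Ei eqxx muln1 => hb.
  have := split_count (lk D G0) (U :\: M1) i.+1; rewrite cUM.
  move: hb; rewrite Ei; ar.
have sM1 : s.+1 <= #|M1| by rewrite cM1.
have c0 : #|set0 : {set T}| <= s.+1 by rewrite cards0.
have [G0 [_ G0M cG0]] := set_between (sub0set M1) c0 sM1.
have [_ KG0] := K G0 G0M cG0.
have claim : forall M2, M2 \in nonf D U s.+2 -> M2 != M1 ->
    (s.+1 == i) && (M2 \in nonf (lk D G0) (U :\: M1) i.+1).
  move=> M2; rewrite !inE => /andP[/andP[M2U /eqP cM2] M2D] ne.
  have IM : ~~ (M1 \subset M1 :&: M2).
    apply/negP => h; move/negP: ne; apply; rewrite eq_sym eqEcard cM1 cM2 leqnn andbT.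
    by apply: subset_trans h (subsetIr _ _).
  have cI : #|M1 :&: M2| <= s.+1.
    have : M1 :&: M2 \proper M1 by rewrite properE subsetIl IM.
    by move/proper_card; rewrite cM1 ltnS.
  have [G1 [IG1 G1M cG1]] := set_between (subsetIl M1 M2) cI sM1.
  have [KB _] := K G1 G1M cG1.
  have BU : M2 :\: G1 \subset U :\: M1.
    apply/subsetP=> z; rewrite !inE => /andP[zG1 zM2]; rewrite (subsetP M2U) // andbT.
    apply: contra zG1 => zM1; apply: (subsetP IG1); by rewrite inE zM1.
  have cB : i < #|M2 :\: G1|.
    rewrite ltnNge; apply/negP => h; move/negP: M2D; apply.
    apply: down (KB _ BU h) _; apply/subsetP=> z zM2; rewrite !inE zM2 andbT.
    by case: (z \in G1).
  have cB2 : #|M2 :\: G1| <= s.+2 by rewrite -cM2 subset_leq_card ?subsetDl.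
  have si1 : s.+1 = i by move: cB cB2 si; ar.
  have eB : M2 :\: G1 = M2.
    apply/eqP; rewrite eqEcard subsetDl /= cM2; move: cB; rewrite -si1; ar.
  rewrite si1 eqxx /= -{1}eB BU cM2 si1 eqxx /= negb_and; apply/orP; right.
  by apply: contra M2D => h; apply: down h (subsetUl _ _).
rewrite (cardsD1 M1) M1X add1n /e.
case: (boolP (s.+1 == i)) => hsi.
  rewrite muln1 add1n ltnS; apply: leq_trans KG0; apply: subset_leq_card.
  apply/subsetP=> M2; rewrite in_setD1 => /andP[ne M2X].
  by case/andP: (claim M2 M2X ne).
rewrite muln0 addn0 ltnS leqn0 cards_eq0; apply/eqP/setP=> M2; rewrite in_setD1 in_set0.
apply/negbTE/negP => /andP[ne M2X]; have := claim M2 M2X ne.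
by rewrite (negbTE hsi).
Qed.

Lemma main_all (T : finType) i : 0 < i -> forall m q s (D G : {set {set T}}),
  q * i + s <= m -> s < i -> Hyp i D G (q * i + s) -> MS i q s D G.
Proof.
move=> i0; elim=> [|m IHm] q s D G hm si H.
all: have IH : forall q' s' (D' G' : {set {set T}}), q' * i + s' < q * i + s -> s' < i ->
      Hyp i D' G' (q' * i + s') -> MS i q' s' D' G'
  by move=> q' s' D' G' h; first [apply: IHm; move: hm h; ar | move: hm h; ar].
all: split; first exact: partA.
all: case: (posnP q) => [q0|q0].
all: try (subst q; have -> : 0 * i + s + 2 + 0 = s.+2 by ar).
all: try (by rewrite binn mul0n subnn).
all: case: (ltnP (q * i + s + 2 + q) #|supp G|) => h.
all: by [apply: partB_nt | apply: partB_t].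
Qed.


Lemma min_nonface (T : finType) (D : {set {set T}}) : forall k (F : {set T}),
  #|F| <= k -> F \notin D ->
  exists M : {set T}, [/\ M \subset F, M \notin D & forall G : {set T}, G \proper M -> G \in D].
Proof.
elim=> [|k IH] F cF FD.
  exists F; split=> // G /proper_card; move: cF; rewrite leqn0 => /eqP ->.
  by rewrite ltn0.
case: (boolP [exists G : {set T}, (G \proper F) && (G \notin D)]).
  case/existsP=> G /andP[GF GD].
  have cG : #|G| <= k by rewrite -ltnS; apply: leq_trans (proper_card GF) cF.
  have [M [MG MD Mp]] := IH G cG GD; exists M; split=> //.
  exact: subset_trans MG (proper_sub GF).
rewrite negb_exists => /forallP H; exists F; split=> // G GF.
by move: (H G); rewrite GF /= negbK.
Qed.

Lemma bsign_neq0 n (F : {set 'I_n}) v : bsign F v != 0%R.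
Proof. by rewrite /bsign expf_eq0 oppr_eq0 oner_eq0 andbF. Qed.

Lemma inC_hyp n i d (D : {set {set 'I_n}}) : in_C i d D ->
  exists G, Hyp i D G d.
Proof.
case=> [[_ down] [[_ dim] [[c [cD [[F0 cF0] bd]]] nma]]].
exists [set F | c F != 0%R]; split.
- exact: down.
- exact: dim.
- move=> F FD; have [M [MF MD Mp]] := min_nonface (leqnn _) FD.
  exists M; split=> //; have := nma M (conj MD Mp).
  by case: #|M| => // m; rewrite subn1 /=.
- by move=> s; rewrite inE => /cD/andP[-> /eqP].
split; first by exists F0; rewrite inE.
move=> s x; rewrite inE => cs xs.
have /andP[sD /eqP cs1] := cD _ cs.
case: (boolP [exists s' : {set 'I_n}, [&& c s' != 0%R, s' != s & s :\ x \subset s']]).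
  by case/existsP=> s' /and3P[h1 h2 h3]; exists s'; rewrite inE.
rewrite negb_exists => /forallP hno.
have cG : #|s :\ x| = d by move: cs1; rewrite (cardsD1 x s) xs add1n => -[].
have := bd _ cG; rewrite /bdry (bigD1 s) /=; last by rewrite sD cs1 eqxx subD1set.
rewrite [X in (_ + X)%R]big1 ?addr0; last first.
  move=> F /andP[/and3P[FD _ sF] Fs].
  have cF : c F = 0%R.
    apply/eqP; apply: contraR (hno F) => h; by rewrite h Fs sF.
  by apply: big1 => v _; rewrite cF mulr0.
have -> : s :\: (s :\ x) = [set x].
  apply/setP=> y; rewrite !inE; case: (y =P x) => [->|]; first by rewrite xs.
  by move=> _ /=; case: (y \in s).
rewrite big_set1 => /eqP; rewrite mulf_eq0 (negbTE (bsign_neq0 _ _)) /=.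
by rewrite (negbTE cs).
Qed.



Lemma card_interval N lo hi : lo <= hi -> hi <= N ->
  #|[set k : 'I_N | lo <= k < hi]| = hi - lo.
Proof.
elim: hi => [|h IH] lohi hN.
  by apply/eqP; rewrite cards_eq0; apply/eqP/setP => k; rewrite !inE ltn0 andbF.
case: (ltngtP lo h.+1) => [lt|gt|eq].
- have hN' : h < N by [].
  have -> : [set k : 'I_N | lo <= k < h.+1] = Ordinal hN' |: [set k : 'I_N | lo <= k < h].
    apply/setP => k; rewrite !inE ltnS [(k <= h)%N]leq_eqVlt -val_eqE /=.
    case: (k =P h :> nat) => [->|_] /=; first by rewrite -ltnS lt.
    by [].
  rewrite cardsU1 IH ?(ltnW hN) // ?inE ?ltnn ?andbF //= subSn //.
- by move: gt lohi; ar.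
- subst lo; rewrite subnn; apply/eqP; rewrite cards_eq0; apply/eqP/setP => k.
  by rewrite !inE ltnS; case: (ltnP h k) => //= hk; rewrite leqNgt hk.
Qed.

Lemma block_eq i d b : S_block i d b =
  [set k : 'I_(S_N i d) | b * i.+1 <= k < b.+1 * i.+1].
Proof.
apply/setP=> k; rewrite !inE eqn_leq -ltnS ltn_divLR // leq_divRL //.
by rewrite andbC.
Qed.

Lemma block_card i d b : 0 < i -> b <= S_q i d ->
  #|S_block i d b| = if b == S_q i d then (S_r i d).+1 else i.+1.
Proof.
move=> i0 bQ; have Rle : S_r i d <= i by rewrite /S_r ltn_pmod.
case: eqP => [eb|nb].
  have -> : S_block i d b = [set k : 'I_(S_N i d) | b * i.+1 <= k < S_N i d].
    rewrite block_eq; apply/setP=> k; rewrite !inE ltn_ord.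
    have : k < b.+1 * i.+1 by apply: leq_trans (ltn_ord k) _; rewrite /S_N eb; ar.
    by move=> ->.
  by rewrite card_interval // /S_N eb; ar.
rewrite block_eq card_interval; [ar | ar |].
have : b < S_q i d by rewrite ltn_neqAle bQ andbT; apply/eqP.
rewrite /S_N; ar.
Qed.

Lemma S_upper i d : 0 < i ->
  fnum (S_complex i d) (S_r i d) <=
  'C(S_N i d, (S_r i d).+1) - (1 + S_q i d * (S_r i d == i)).
Proof.
move=> i0.
have Rle : S_r i d <= i by rewrite /S_r ltn_pmod.
set Ix := [set b : 'I_(S_q i d).+1 | (val b == S_q i d) || (S_r i d == i)].
set Bl := [set S_block i d (val b) | b in Ix].
have inj : {in Ix &, injective (fun b : 'I_(S_q i d).+1 => S_block i d (val b))}.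
  move=> b1 b2 _ _ e.
  have lt : b1 * i.+1 < S_N i d.
    apply: leq_trans (_ : S_q i d * i.+1 < _); last by rewrite /S_N; ar.
    have := ltn_ord b1; rewrite ltnS; ar.
  have : Ordinal lt \in S_block i d b1 by rewrite inE /= mulnK.
  rewrite e inE /= mulnK // => /eqP h; exact: val_inj.
have cBl : #|Bl| = 1 + S_q i d * (S_r i d == i).
  rewrite card_in_imset //; case: (boolP (S_r i d == i)) => h.
    rewrite muln1 add1n -[RHS](card_ord (S_q i d).+1); apply: eq_card => b.
    by rewrite !inE h orbT.
  rewrite muln0 addn0 -[RHS](cards1 (@ord_max (S_q i d))); apply: eq_card => b.
  by rewrite !inE (negbTE h) orbF -val_eqE.
set Z := [set F : {set 'I_(S_N i d)} | #|F| == (S_r i d).+1].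
have BlZ : Bl \subset Z.
  apply/subsetP=> F /imsetP[b bI ->]; rewrite inE block_card //; last first.
    by have := ltn_ord b; rewrite ltnS.
  move: bI; rewrite inE; case: eqP => [_|_] /= h; first by rewrite eqxx.
  by rewrite (eqP h).
have sub : [set F in S_complex i d | #|F| == (S_r i d).+1] \subset Z :\: Bl.
  apply/subsetP=> F; rewrite !inE => /andP[/forallP FS cF]; rewrite cF andbT.
  apply/imsetP => -[b _ eF]; have := FS b; rewrite eF setIid inE.
  by rewrite properxx.
rewrite /fnum; apply: leq_trans (subset_leq_card sub) _.
rewrite cardsD (setIidPr BlZ) cBl /Z card_draws card_ord.
by [].
Qed.



Lemma fnum_le N (X : {set {set 'I_N}}) j : fnum X j <= 'C(N, j.+1).
Proof.
rewrite /fnum -[N in 'C(N, _)]card_ord -card_draws; apply: subset_leq_card.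
by apply/subsetP=> F; rewrite !inE => /andP[].
Qed.

Lemma cnt_fnum (T : finType) (D : {set {set T}}) (U : {set T}) k :
  cnt D U k.+1 <= #|[set F in D | #|F| == k.+1]|.
Proof.
apply: subset_leq_card; apply/subsetP=> F; rewrite !inE => /andP[-> /andP[_ ->]].
by [].
Qed.

Unset Implicit Arguments.
Theorem theorem1p1 (d i q r : nat) (hi : (0 < i)%N) (hid : (i <= d.+1)%N)
  (hqr : d.+1 = (q * i + r)%N) (hr1 : (1 <= r)%N) (hri : (r <= i)%N)
  (n : nat) (D : {set {set 'I_n}}) (hD : in_C i d D) :
  forall j : nat, (1 <= j)%N -> (j <= r)%N ->
    (fnum (S_complex i d) j <= fnum D j)%N.
Proof.
move=> j j1 jr.
have [G H] := inC_hyp hD.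
have si : r.-1 < i by move: hr1 hri; ar.
have dq : d = q * i + r.-1 by move: hqr hr1; ar.
have Sq : S_q i d = q by rewrite /S_q dq divnMDl // divn_small // addn0.
have Sr : S_r i d = r by rewrite /S_r dq modnMDl modn_small // prednK.
have SN : S_N i d = q * i + r.-1 + 2 + q by rewrite /S_N Sq Sr; move: hr1; ar.
rewrite dq in H.
have [MA MB] := main_all hi (leqnn _) si H.
case: (ltngtP j r) => [jlt|jgt|jeq].
- apply: leq_trans (fnum_le _ _) _; rewrite SN.
  have := MA j (_ : j <= r.-1); rewrite -ltnS prednK // => /(_ jlt) h.
  exact: leq_trans h (cnt_fnum _ _ _).
- by move: jr; rewrite leqNgt jgt.
- subst j; have := S_upper d hi; rewrite Sr Sq => h; apply: leq_trans h _.
  apply: leq_trans (cnt_fnum D (supp G) r); move: MB; rewrite prednK // SN.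
  by [].
Qed.
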